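(* Let $G$ be a finite vertex-transitive bipartite graph. Then $G$ is IS-imprimitive if and only if $G$ is disconnected.
   Context: Graphs are finite and simple; $\alpha(G)$ is the independence number. For $A\subseteq V(G)$, $N_G(A)=\{b: ab\in E(G)\text{ for some }a\in A\}$ and $N_G[A]=N_G(A)\cup A$. A (nonempty) independent set $A$ of $G$ is imprimitive if $|A|<\alpha(G)$ and $\frac{|A|}{|N_G[A]|}=\frac{\alpha(G)}{|V(G)|}$. $G$ is IS-imprimitive (called ''imprimitive'' in the paper's statement of this lemma) if it has an imprimitive independent set. *)

(* Defs.v *)
(* A finite simple graph is a symmetric irreflexive
   relation e : rel T on a finType T (vertex set = T). *)
From mathcomp Require Import all_boot all_fingroup.
Set Implicit Arguments. Unset Strict Implicit. Unset Printing Implicit Defensive.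

Section Graphs.
Variable T : finType.
Implicit Types (e : rel T) (A : {set T}).

Definition independent e A : bool :=
  [forall x in A, forall y in A, ~~ e x y].

Definition alpha e : nat := \max_(A : {set T} | independent e A) #|A|.

Definition nbhd e A : {set T} := [set b | [exists a in A, e a b]].
Definition cnbhd e A : {set T} := nbhd e A :|: A.

(* A nonempty independent set A is imprimitive if |A| < alpha(G) and
   |A| / |N[A]| = alpha(G) / |V(G)|  (stated by cross-multiplication). *)
Definition imprimitive_set e A : bool :=
  [&& independent e A, A != set0, #|A| < alpha e &
      #|A| * #|T| == alpha e * #|cnbhd e A|].

Definition IS_imprimitive e : Prop := exists A : {set T}, imprimitive_set e A.

Definition is_automorphism e (f : {perm T}) : Prop :=
  forall u v, e (f u) (f v) = e u v.

Definition vertex_transitive e : Prop :=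
  forall x y, exists f : {perm T}, is_automorphism e f /\ f x = y.

Definition bipartite e : Prop :=
  exists c : T -> bool, forall x y, e x y -> c x != c y.

Definition connected e : Prop := forall x y, connect e x y.

End Graphs.

(* Main.v *)
Require Import Defs.
From mathcomp Require Import all_boot all_fingroup.
From mathcomp Require Import zify.
Set Implicit Arguments. Unset Strict Implicit. Unset Printing Implicit Defensive.

Section S.
Variable T : finType.
Variable e : rel T.
Hypothesis e_sym : symmetric e.
Hypothesis e_irr : irreflexive e.
Implicit Types (A B : {set T}).

Definition deg x := #|[set y | e x y]|.
Definition fB (B : {set T}) x := \sum_(y in B) (e x y : nat).

Lemma deg_split B x : deg x = fB B x + fB (~: B) x.
Proof.
rewrite /deg /fB -sum1dep_card big_mkcond /= (bigID (mem B)) /=.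
congr (_ + _); apply: eq_bigl => y //; by rewrite in_setC.
Qed.

Lemma fB_full B x : {subset [set y | e x y] <= B} -> fB B x = deg x.
Proof.
move=> sub; rewrite (deg_split B) -[LHS]addn0; congr (_ + _).
apply/esym/eqP; rewrite sum_nat_eq0; apply/forallP => y; apply/implyP.
rewrite in_setC => yB; case exy: (e x y) => //.
by move: yB; rewrite sub // inE exy.
Qed.

Lemma fB_le B x : fB B x <= deg x.
Proof. by rewrite (deg_split B) leq_addr. Qed.

Lemma fB_eq B x : fB B x = deg x -> forall y, e x y -> y \in B.
Proof.
rewrite (deg_split B) -{1}[fB B x]addn0 => /addnI/esym/eqP.
rewrite sum_nat_eq0 => /forallP H y exy; apply/negPn/negP => yB.
by have := implyP (H y); rewrite in_setC yB exy => /(_ isT).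
Qed.

Lemma double_count A B :
  \sum_(a in A) fB B a = \sum_(b in B) fB A b.
Proof.
rewrite /fB exchange_big /=; apply: eq_bigr => b _; apply: eq_bigr => a _.
by rewrite e_sym.
Qed.

Variable d : nat.
Hypothesis reg : forall x, deg x = d.

Lemma nb_sub A x : x \in A -> {subset [set y | e x y] <= nbhd e A}.
Proof. move=> xA y; rewrite !inE => exy; apply/existsP; exists x; by rewrite xA. Qed.

Lemma L1 A : d * #|A| <= d * #|nbhd e A|.
Proof.
rewrite mulnC -sum_nat_const.
rewrite (eq_bigr (fun a => fB (nbhd e A) a)); last first.
  by move=> a aA; rewrite fB_full ?reg //; apply: nb_sub.
rewrite double_count mulnC -sum_nat_const; apply: leq_sum => b _.
by rewrite -(reg b) fB_le.
Qed.

Lemma L2 A : d * #|A| = d * #|nbhd e A| ->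
  forall b y, b \in nbhd e A -> e b y -> y \in A.
Proof.
move=> H b y bN.
apply: fB_eq.
move: H; rewrite mulnC -sum_nat_const.
rewrite (eq_bigr (fun a => fB (nbhd e A) a)); last first.
  by move=> a aA; rewrite fB_full ?reg //; apply: nb_sub.
rewrite double_count mulnC -sum_nat_const => H.
have : \sum_(i in nbhd e A) (d - fB A i) == 0.
  by rewrite sumnB; [rewrite H subnn | move=> i _; rewrite -(reg i) fB_le].
rewrite sum_nat_eq0 => /forallP/(_ b)/implyP/(_ bN).
rewrite subn_eq0 => le; apply/eqP; by rewrite reg eqn_leq le andbT -(reg b) fB_le.
Qed.

Lemma indepP A : reflect (forall u v, u \in A -> v \in A -> ~~ e u v) (independent e A).
Proof.
apply: (iffP idP).
- by move=> H u v uA vA; move: H => /forallP/(_ u)/implyP/(_ uA)/forallP/(_ v)/implyP/(_ vA).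
- move=> H; apply/forallP => u; apply/implyP => uA; apply/forallP => v; apply/implyP => vA.
  exact: H.
Qed.

Lemma card_cnbhd A : independent e A -> #|cnbhd e A| = #|nbhd e A| + #|A|.
Proof.
move/indepP => H; rewrite /cnbhd cardsU.
suff -> : nbhd e A :&: A = set0 by rewrite cards0 subn0.
apply/setP => z; rewrite !inE; apply/negbTE/negP => /andP[/existsP[a /andP[aA eaz]] zA].
by have := H a z aA zA; rewrite eaz.
Qed.

Lemma alpha_ge A : independent e A -> #|A| <= alpha e.
Proof. by move=> iA; rewrite /alpha; apply: (leq_bigmax_cond A). Qed.

Lemma alpha_ex : exists A, independent e A /\ alpha e = #|A|.
Proof.
have i0 : independent e set0 by apply/indepP => u v; rewrite inE.
rewrite /alpha (bigmax_eq_arg set0) //.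
eexists; split; last reflexivity.
by case: arg_maxnP.
Qed.

Lemma deg_vt : vertex_transitive e -> forall x y, deg x = deg y.
Proof.
move=> vt x y; have [f [af fx]] := vt x y.
rewrite /deg -fx -(card_imset _ (@perm_inj _ f)); apply: eq_card => z.
rewrite inE; apply/imsetP/idP.
- by case=> w; rewrite inE => exw ->; rewrite af.
- move=> ez; exists (f^-1%g z); first by rewrite inE -af permKV.
  by rewrite permKV.
Qed.
End S.
Lemma conn_closed (T : finType) (e : rel T) (S : {set T}) :
  (forall u v, e u v -> u \in S -> v \in S) ->
  forall x y, connect e x y -> x \in S -> y \in S.
Proof.
move=> H x y /connectP[p pth ->]; elim: p x pth => //= z p IH x /andP[exz pth] xS.
exact: IH pth (H _ _ exz xS).
Qed.

Theorem lemma3p2 (T : finType) (e : rel T)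
  (e_sym : symmetric e) (e_irr : irreflexive e)
  (vt : vertex_transitive e) (bip : bipartite e) :
  IS_imprimitive e <-> ~ connected e.
Proof.
case: (pickP T) => [x0 _ | T0]; last first.
  split.
  - by case=> A /and4P[_ /set0Pn [a _] _ _]; have := T0 a.
  - by move=> nc; exfalso; apply: nc => x; have := T0 x.
set d := deg e x0.
have reg : forall x, deg e x = d by move=> x; rewrite /d (deg_vt vt x x0).
have [d0|dpos] := posnP d.
- have noe : forall x y, e x y = false.
    move=> x y; apply/negbTE/negP => exy.
    have := reg x; rewrite d0 => /eqP; rewrite cards_eq0 => /eqP H.
    have : y \in [set z | e x z] by rewrite inE.
    by rewrite H inE.
  have conn0 : forall x y, connect e x y -> y = x.
    move=> x y /connectP[[|z p] /= pth ->] //.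
    by move: pth; rewrite noe.
  have alT : alpha e = #|T|.
    apply/eqP; rewrite eqn_leq; apply/andP; split.
    + by apply/bigmax_leqP => A _; apply: max_card.
    + rewrite -cardsT; apply: alpha_ge; apply/indepP => u v _ _; by rewrite noe.
  split.
  + case=> A /and4P[_ /set0Pn [a aA] Alt _] conn.
    have : #|T| <= 1.
      rewrite -cardsT -(cards1 a); apply: subset_leq_card; apply/subsetP => y _.
      by rewrite inE (conn0 _ _ (conn a y)).
    have : 0 < #|A| by apply/card_gt0P; exists a.
    lia.
  + move=> nc.
    have : ~~ [forall x, [forall y, connect e x y]].
      by apply/negP => /forallP H; apply: nc => x y; move/forallP: (H x); apply.
    case/forallPn => x /forallPn [y nxy].
    have xy : x != y by apply/negP => /eqP xy; rewrite xy connect0 in nxy.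
    exists [set x]; apply/and4P; split.
    * by apply/indepP => u v _ _; rewrite noe.
    * by apply/set0Pn; exists x; rewrite inE.
    * rewrite alT cards1; apply: leq_trans (max_card [set x; y]); by rewrite cards2 xy.
    * have -> : cnbhd e [set x] = [set x].
        apply/setP => z; rewrite /cnbhd /nbhd !inE.
        case: (z == x); rewrite ?orbT //= orbF; apply/negbTE/existsP => -[a].
        by rewrite noe andbF.
      by rewrite alT cards1 muln1 mul1n.
- have cancel : forall m n, d * m <= d * n -> m <= n.
    by move=> m n; rewrite leq_pmul2l.
  have indle : forall A, independent e A -> #|A| * 2 <= #|T|.
    move=> A iA; have := cancel _ _ (L1 e_sym reg A).
    have := card_cnbhd iA; have := max_card (cnbhd e A); lia.
  have al2 : alpha e * 2 = #|T|.
    apply/eqP; rewrite eqn_leq; apply/andP; split.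
    + have [A0 [iA0 ->]] := alpha_ex e; exact: indle.
    + case: bip => c cP.
      have i1 : independent e [set z | c z].
        apply/indepP => u v; rewrite !inE => cu cv; apply/negP => /cP.
        by rewrite cu cv.
      have i2 : independent e (~: [set z | c z]).
        apply/indepP => u v; rewrite !inE => cu cv; apply/negP => /cP.
        by rewrite (negbTE cu) (negbTE cv).
      have := cardsC [set z | c z]; have := alpha_ge i1; have := alpha_ge i2; lia.
  split.
  + case=> A /and4P[iA /set0Pn [a aA] Alt /eqP Heq] conn.
    have cA := card_cnbhd iA.
    have HN : #|nbhd e A| = #|A| by nia.
    have cl : forall u v, e u v -> u \in cnbhd e A -> v \in cnbhd e A.
      move=> u v euv; rewrite /cnbhd !in_setU => /orP[uN|uA].
      * by rewrite (L2 e_sym reg _ uN euv) ?orbT // HN.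
      * by rewrite (nb_sub uA) // inE.
    have full : cnbhd e A = setT.
      apply/setP => y; rewrite in_setT; apply: (conn_closed cl (conn a y)).
      by rewrite /cnbhd in_setU aA orbT.
    move: cA; rewrite full cardsT; lia.
  + move=> nc.
    have : ~~ [forall x, [forall y, connect e x y]].
      by apply/negP => /forallP H; apply: nc => x y; move/forallP: (H x); apply.
    case/forallPn => x /forallPn [y nxy].
    case: bip => c cP.
    set C := [set z | connect e x z].
    set A := [set z | connect e x z && (c z == c x)].
    have iA : independent e A.
      apply/indepP => u v; rewrite !inE => /andP[_ /eqP cu] /andP[_ /eqP cv].
      by apply/negP => /cP; rewrite cu cv eqxx.
    have Nsub : forall b, b \in nbhd e A -> connect e x b && (c b != c x).
      move=> b; rewrite inE => /existsP[a /andP[]]; rewrite inE => /andP[xa /eqP ca] eab.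
      rewrite (connect_trans xa (connect1 eab)) /=.
      by rewrite -ca eq_sym; apply: cP.
    have NN : {subset nbhd e (nbhd e A) <= A}.
      move=> w; rewrite inE => /existsP[b /andP[bN ebw]]; have /andP[xb cb] := Nsub _ bN.
      rewrite inE (connect_trans xb (connect1 ebw)) /=.
      have := cP _ _ ebw; move: cb; by case: (c w); case: (c b); case: (c x).
    have cAN : #|A| = #|nbhd e A|.
      apply/eqP; rewrite eqn_leq (cancel _ _ (L1 e_sym reg A)) /=.
      apply: cancel; apply: leq_trans (L1 e_sym reg (nbhd e A)) _.
      by rewrite leq_mul2l subset_leq_card ?orbT //; apply/subsetP.
    have cC : cnbhd e A = C.
      apply/setP => z; rewrite /cnbhd in_setU; apply/idP/idP.
      * case/orP => [/Nsub/andP[xz _]|]; [by rewrite inE | by rewrite !inE => /andP[]].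
      * rewrite inE => xz; case cz: (c z == c x); first by rewrite !inE xz cz ?orbT.
        have : 0 < deg e z by rewrite reg.
        case/card_gt0P => w; rewrite inE => ezw.
        apply/orP; left; rewrite inE; apply/existsP; exists w; rewrite inE (e_sym w z) ezw andbT.
        rewrite (connect_trans xz (connect1 ezw)) /=.
        have := cP _ _ ezw; move: cz; by case: (c w); case: (c z); case: (c x).
    have Clt : #|C| < #|T|.
      rewrite -cardsT; apply: proper_card; rewrite properT; apply/negP => /eqP CT.
      have : y \in C by rewrite CT inE.
      by rewrite inE (negbTE nxy).
    have cC2 : #|C| = #|A| * 2 by rewrite -cC card_cnbhd // -cAN; lia.
    exists A; apply/and4P; split => //.
    * by apply/set0Pn; exists x; rewrite inE connect0 eqxx.
    * lia.
    * by rewrite cC -al2 cC2 mulnCA.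
Qed.
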